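(* Let $k,\ell,t$ be positive integers with $k$ even, and write $q:=2^k$ and $Q:=2^\ell$. Let $\operatorname{ord}_2(n)$ denote the largest nonnegative integer $i$ with $2^i\mid n$. Let $D(X)\in\mathbb{F}_2[X]$ be such that either (a) $\operatorname{ord}_2(\ell)\le\operatorname{ord}_2(k)$ and $D(X)=X^{Q+1}+X+1$; or (b) $\operatorname{ord}_2(\ell)\ne\operatorname{ord}_2(k)$ and $D(X)=X^Q+X+1$. Then: (1) If $r$ is a positive integer such that $\gcd(r,q-1)=1$ and $r\equiv Q+1+2t\pmod{q+1}$, then $X^r B(X^{q-1})$ permutes $\mathbb{F}_{q^2}$, where $B(X):=D(X)\cdot (X^{2t}+X^t+1)$. (2) If either $\ell$ is even and (a) holds, or $\ell$ is odd and (b) holds, then $B(X):=D(X)/(X^2+X+1)$ lies in $\mathbb{F}_{q^2}[X]$, and if $r$ is a positive integer such that $\gcd(r,q-1)=1$ and $r\equiv Q-1\pmod{q+1}$, then $X^r B(X^{q-1})$ permutes $\mathbb{F}_{q^2}$.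
   Context: A polynomial $f(X)\in\mathbb{F}_{q^2}[X]$ is said to permute $\mathbb{F}_{q^2}$ if the map $c\mapsto f(c)$ is a bijection of $\mathbb{F}_{q^2}$. Here $\mathbb{F}_2[X]\subseteq\mathbb{F}_{q^2}[X]$. *)

(* Defs.v *)
From mathcomp Require Import all_boot all_order all_algebra all_field.
Set Implicit Arguments. Unset Strict Implicit. Unset Printing Implicit Defensive.
Import GRing.Theory.
Local Open Scope ring_scope.

Definition permutes (F : finFieldType) (f : {poly F}) : Prop :=
  bijective (fun c : F => f.[c]).

Definition xrB (F : finFieldType) (r q : nat) (B : {poly F}) : {poly F} :=
  'X^r * (B \Po 'X^(q - 1)%N).

Definition ord2 (n : nat) : nat := logn 2 n.

(* Main.v *)
Require Import Defs.
From mathcomp Require Import all_boot all_order all_algebra all_field.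
From mathcomp Require Import all_fingroup all_solvable.
From mathcomp Require Import ring zify.
Set Implicit Arguments. Unset Strict Implicit. Unset Printing Implicit Defensive.
Import GRing.Theory.
Local Open Scope ring_scope.


Section Char2.
Variable F : fieldType.
Hypothesis h2 : (1 + 1 : F) = 0.

Lemma addxx (x : F) : x + x = 0.
Proof. have -> : x + x = x * (1 + 1) by ring. by rewrite h2 mulr0. Qed.

Lemma frob2 (x y : F) : (x + y) ^+ 2 = x ^+ 2 + y ^+ 2.
Proof.
have -> : (x + y) ^+ 2 = x ^+ 2 + y ^+ 2 + (x * y) * (1 + 1) by ring.
by rewrite h2 mulr0 addr0.
Qed.

Lemma frobn n (x y : F) : (x + y) ^+ (2 ^ n) = x ^+ (2 ^ n) + y ^+ (2 ^ n).
Proof.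
elim: n => [|n IH]; first by rewrite !expr1.
by rewrite expnSr !exprM IH frob2.
Qed.

Lemma modeq (a x y c1 c2 : F) : a ^+ 2 + a + 1 = 0 ->
  x - y = c1 * (a ^+ 2 + a + 1) + c2 * (1 + 1) -> x = y.
Proof. by move=> ha; rewrite ha h2 !mulr0 addr0 => /eqP; rewrite subr_eq0 => /eqP. Qed.

Lemma inv_self (u : F) : u != 0 -> u = u^-1 -> u = 1.
Proof.
move=> u0 hu.
have uu : u * u = 1 by rewrite {2}hu divff.
have : (u + 1) ^+ 2 = 0 by rewrite frob2 expr2 uu expr1n h2.
move/eqP; rewrite expf_eq0 /= addr_eq0 => /eqP ->.
by apply/eqP; rewrite eq_sym -addr_eq0 h2.
Qed.

Lemma frob_pow (u : F) m j (bb : bool) :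
  u ^+ (2 ^ m) = (if bb then u^-1 else u) ->
  u ^+ (2 ^ (m * j)) = (if bb && odd j then u^-1 else u).
Proof.
move=> hm; elim: j => [|j IH]; first by rewrite muln0 expr1 andbF.
rewrite mulnSr expnD exprM IH.
case: bb hm IH => /= hm IH; last by case: (odd j) IH => /=; rewrite hm.
by case: (odd j) => /=; rewrite ?exprVn hm ?invrK.
Qed.

Lemma frob_conclude (u : F) (x y : nat) (bx b_y : bool) : (0 < x)%N -> (0 < y)%N ->
  u ^+ (2 ^ x) = (if bx then u^-1 else u) -> u ^+ (2 ^ y) = (if b_y then u^-1 else u) ->
  (bx && (logn 2 y <= logn 2 x)%N) != (b_y && (logn 2 x <= logn 2 y)%N) -> u = u^-1.
Proof.
move=> x0 y0 hx hy hne.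
have [x' cx ex] := pfactor_coprime (isT : prime 2) x0.
have [y' cy ey] := pfactor_coprime (isT : prime 2) y0.
set al := logn 2 x in ex hne; set be := logn 2 y in ey hne.
set M := maxn al be.
have e1 : (x * (y' * 2 ^ (M - al)) = x' * y' * 2 ^ M)%N.
  have hM : (2 ^ M = 2 ^ al * 2 ^ (M - al))%N by rewrite -expnD subnKC ?leq_maxl.
  rewrite ex hM; ring.
have e2 : (y * (x' * 2 ^ (M - be)) = x' * y' * 2 ^ M)%N.
  have hM : (2 ^ M = 2 ^ be * 2 ^ (M - be))%N by rewrite -expnD subnKC ?leq_maxr.
  rewrite ey hM; ring.
have h1 := frob_pow (y' * 2 ^ (M - al)) hx.
have h2' := frob_pow (x' * 2 ^ (M - be)) hy.
rewrite e1 in h1; rewrite e2 in h2'.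
rewrite coprime2n in cx; rewrite coprime2n in cy.
rewrite !oddM !oddX cx cy /= subn_eq0 in h1 h2'.
rewrite orbF /M geq_max leqnn /= in h1.
rewrite orbF subn_eq0 /M geq_max leqnn andbT in h2'.
move: hne; rewrite h1 in h2'; move: h2'.
by clear; case: bx b_y => [] [] /=; case: (be <= al)%N; case: (al <= be)%N => //= ->.
Qed.

End Char2.


Lemma mod3 n : (2 ^ n %% 3 = if odd n then 2 else 1)%N.
Proof.
elim: n => // n IH; rewrite expnS -modnMmr IH /=.
by case: (odd n).
Qed.

Section Fin.
Variable F : finFieldType.
Variables k l : nat.
Hypothesis h2 : (1 + 1 : F) = 0.
Hypothesis keven : ~~ odd k.

Definition mu (z : F) := z ^+ (2 ^ k) * z = 1.

Lemma root3 (c : F) : c ^+ 2 + c + 1 = 0 -> c ^+ 3 = 1.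
Proof.
move=> hc; apply: (modeq h2 hc (c1 := c + 1) (c2 := - (c ^+ 2 + c + 1))); ring.
Qed.

Lemma root_expn (c : F) n : c ^+ 2 + c + 1 = 0 -> c ^+ n = c ^+ (n %% 3).
Proof. by move=> hc; rewrite (expr_mod _ (root3 hc)). Qed.

Lemma root_q (c : F) : c ^+ 2 + c + 1 = 0 -> c ^+ (2 ^ k) = c.
Proof. by move=> hc; rewrite (root_expn _ hc) mod3 (negbTE keven) expr1. Qed.

Lemma root_Q (c : F) : c ^+ 2 + c + 1 = 0 ->
  c ^+ (2 ^ l) = if odd l then c ^+ 2 else c.
Proof. by move=> hc; rewrite (root_expn _ hc) mod3; case: (odd l); rewrite ?expr1. Qed.

Lemma root_sq (c : F) : c ^+ 2 + c + 1 = 0 -> (c ^+ 2) ^+ 2 + c ^+ 2 + 1 = 0.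
Proof.
move=> hc; have c4 : (c ^+ 2) ^+ 2 = c by rewrite -exprM (root_expn (2 * 2) hc) expr1.
by rewrite c4 (addrC c).
Qed.

Lemma one_neq (c : F) : c ^+ 2 + c + 1 = 0 -> c != 1.
Proof.
move=> hc; apply/eqP => c1; move: hc; rewrite c1 expr1n h2 add0r => /eqP.
by rewrite oner_eq0.
Qed.

Lemma mu_neq0 u : mu u -> u != 0.
Proof.
move=> hu; apply/eqP => u0; move: hu; rewrite /mu u0 mulr0 => /eqP.
by rewrite eq_sym oner_eq0.
Qed.

Lemma muM u v : mu u -> mu v -> mu (u * v).
Proof. by rewrite /mu => hu hv; rewrite exprMn mulrACA hu hv mulr1. Qed.

Lemma muX u n : mu u -> mu (u ^+ n).
Proof. by rewrite /mu => hu; rewrite exprAC -exprMn hu expr1n. Qed.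

Lemma muV u : mu u -> mu (u^-1).
Proof. by rewrite /mu => hu; rewrite exprVn -invfM hu invr1. Qed.

Lemma mu_q u : mu u -> u ^+ (2 ^ k) = u^-1.
Proof.
move=> hu; have u0 := mu_neq0 hu.
by apply: (mulIf u0); rewrite hu mulVf.
Qed.

Lemma mu_noroot u : mu u -> u ^+ 2 + u + 1 != 0.
Proof.
move=> hu; apply/eqP => hr.
have u0 := mu_neq0 hu.
have uu : u ^+ 2 = 1 by move: hu; rewrite /mu (root_q hr) -expr2.
have : u ^+ 3 = u by rewrite exprS uu mulr1.
by rewrite (root3 hr) => /esym/eqP; rewrite (negbTE (one_neq hr)).
Qed.

Lemma root_mu c v : c ^+ 2 + c + 1 = 0 -> mu v -> c * v + 1 != 0.
Proof.
move=> hc hv; apply/eqP => e.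
have cv : c * v = 1 by rewrite -[c * v]addr0 -h2 addrA e add0r.
have ve : v = c ^+ 2.
  by rewrite -[v]mulr1 -(root3 hc) exprS mulrA [v * c]mulrC cv mul1r.
have := mu_noroot hv; by rewrite ve (root_sq hc) eqxx.
Qed.


Lemma lam_ex (a z : F) : a ^+ 2 + a + 1 = 0 -> mu z ->
  exists w, mu w /\ z * (a * w + 1) = w + a.
Proof.
move=> ha hz.
have d0 : a * z + 1 != 0 := root_mu ha hz.
exists ((z + a) / (a * z + 1)); split.
- rewrite /mu exprMn exprVn !frobn // exprMn (root_q ha) expr1n.
  set y := z ^+ (2 ^ k).
  have yz : y * z = 1 := hz.
  have dy : a * y + 1 != 0 := root_mu ha (muX (2 ^ k) hz).
  rewrite mulrACA -invfM.
  have -> : (y + a) * (z + a) = (a * y + 1) * (a * z + 1).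
    apply/eqP; rewrite -subr_eq0.
    have -> : (y + a) * (z + a) - (a * y + 1) * (a * z + 1) = (y * z - 1) * (1 - a ^+ 2) by ring.
    by rewrite yz subrr mul0r.
  by rewrite divff // mulf_neq0.
- set w := (z + a) / (a * z + 1).
  have wd : w * (a * z + 1) = z + a by rewrite /w mulfVK.
  apply: (mulIf d0).
  have -> : z * (a * w + 1) * (a * z + 1) = z * a * (w * (a * z + 1)) + z * (a * z + 1) by ring.
  have -> : (w + a) * (a * z + 1) = w * (a * z + 1) + a * (a * z + 1) by ring.
  rewrite wd; apply: (modeq h2 ha (c1 := 0) (c2 := a * z ^+ 2 - a)); ring.
Qed.

Lemma e_inj (u : F) e : (0 < k)%N -> (0 < l)%N -> mu u -> u ^+ e = 1 ->
  (e = 2 ^ l - 1 /\ (logn 2 l <= logn 2 k))%N \/ (e = 2 ^ l + 1 /\ logn 2 l != logn 2 k)%N ->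
  u = 1.
Proof.
move=> k0 l0 hu hue hcase.
have u0 := mu_neq0 hu.
have hq := mu_q hu.
apply: (inv_self h2 u0).
case: hcase => [[ee hlk]|[ee hlk]]; subst e.
- have hQ : u ^+ (2 ^ l) = u.
    by rewrite -(subnK (expn_gt0 2 l)) exprD hue mul1r.
  apply: (@frob_conclude F u l k false true l0 k0 hQ hq).
  by rewrite hlk.
- have hQ : u ^+ (2 ^ l) = u^-1.
    by apply: (mulIf u0); rewrite -exprSr -addn1 hue mulVf.
  apply: (@frob_conclude F u l k true true l0 k0 hQ hq) => /=.
  by move: hlk; case: ltngtP.
Qed.

Lemma h_inj (a b : F) e (Dv Dtv : F -> F) :
  a ^+ 2 + a + 1 = 0 -> b ^+ 2 + b + 1 = 0 ->
  (forall u, mu u -> u ^+ e = 1 -> u = 1) ->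
  (forall z, mu z -> forall w, mu w -> z * (a * w + 1) = w + a ->
     exists s cc, [/\ s != 0, cc != 0, Dv z * cc = s * (b * w ^+ e + 1) &
                     Dtv z * cc = s * (w ^+ e + b)]) ->
  (forall z, mu z -> Dv z != 0) /\
  (forall z1 z2, mu z1 -> mu z2 -> Dtv z1 * Dv z2 = Dtv z2 * Dv z1 -> z1 = z2).
Proof.
move=> ha hb he H; split.
- move=> z hz; have [w [hw hzw]] := lam_ex ha hz.
  have [s [cc [s0 c0 e1 e2]]] := H z hz w hw hzw.
  apply/eqP=> d0; move: e1; rewrite d0 mul0r => /esym/eqP.
  by rewrite mulf_eq0 (negbTE s0) /= (negbTE (root_mu hb (muX e hw))).
- move=> z1 z2 hz1 hz2 heq.
  have [w1 [hw1 hzw1]] := lam_ex ha hz1.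
  have [w2 [hw2 hzw2]] := lam_ex ha hz2.
  have [s1 [cc1 [s10 c10 e11 e12]]] := H z1 hz1 w1 hw1 hzw1.
  have [s2 [cc2 [s20 c20 e21 e22]]] := H z2 hz2 w2 hw2 hzw2.
  have E : (Dtv z1 * cc1) * (Dv z2 * cc2) = (Dtv z2 * cc2) * (Dv z1 * cc1).
    by rewrite [LHS]mulrACA heq [RHS]mulrACA [cc2 * cc1]mulrC.
  rewrite e11 e12 e21 e22 in E.
  set v1 := w1 ^+ e in E; set v2 := w2 ^+ e in E.
  have E' : s1 * s2 * ((v1 - v2) * (1 - b ^+ 2)) =
     s1 * (v1 + b) * (s2 * (b * v2 + 1)) - s2 * (v2 + b) * (s1 * (b * v1 + 1)) by ring.
  rewrite E subrr in E'.
  have b2 : 1 - b ^+ 2 != 0.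
    apply/negP; rewrite subr_eq0 => /eqP b2.
    have b0 : b = 0.
      have : b + (1 + 1) = b ^+ 2 + b + 1 by rewrite -b2; ring.
      by rewrite h2 hb addr0.
    by move: b2; rewrite b0 expr0n /= => /eqP; rewrite oner_eq0.
  move/eqP: E'; rewrite !mulf_eq0 (negbTE s10) (negbTE s20) (negbTE b2) /= orbF subr_eq0.
  move/eqP => v12.
  have w20 := mu_neq0 hw2.
  have hu : mu (w1 * w2^-1) by apply: muM => //; apply: muV.
  have := he _ hu; rewrite exprMn exprVn -/v1 -/v2 v12 divff ?expf_neq0 // => /(_ erefl).
  move/divr1_eq => w12; subst w2.
  apply: (mulIf (root_mu ha hw1)); by rewrite hzw1 hzw2.
Qed.


Definition Dt (D : {poly F}) (z : F) := z ^+ (2 ^ l + 1) * D.[z ^+ (2 ^ k)].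

Lemma prep (a z w : F) : mu z -> z * (a * w + 1) = w + a ->
  z ^+ (2 ^ l) * (a ^+ (2 ^ l) * w ^+ (2 ^ l) + 1) = w ^+ (2 ^ l) + a ^+ (2 ^ l).
Proof.
move=> hz hzw; have := congr1 (fun x => x ^+ (2 ^ l)) hzw.
by rewrite /= exprMn !frobn // exprMn expr1n.
Qed.

Lemma evalA D z : D = 'X^(2 ^ l + 1) + 'X + 1 -> mu z ->
  D.[z] = z ^+ (2 ^ l) * z + z + 1 /\ Dt D z = z ^+ (2 ^ l) * z + z ^+ (2 ^ l) + 1.
Proof.
move=> -> hz; rewrite /Dt !hornerE addn1 !exprSr; split => //.
have yz : z ^+ (2 ^ k) * z = 1 := hz; move: (z ^+ (2 ^ k)) yz => y yz.
have -> : z ^+ (2 ^ l) * z * (y ^+ (2 ^ l) * y + y + 1) =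
   (y * z) ^+ (2 ^ l) * (y * z) + z ^+ (2 ^ l) * (y * z) + z ^+ (2 ^ l) * z.
  by rewrite exprMn; ring.
by rewrite yz expr1n !mulr1; ring.
Qed.

Lemma evalB D z : D = 'X^(2 ^ l) + 'X + 1 -> mu z ->
  D.[z] = z ^+ (2 ^ l) + z + 1 /\ Dt D z = z + z ^+ (2 ^ l) + z ^+ (2 ^ l) * z.
Proof.
move=> -> hz; rewrite /Dt !hornerE addn1 !exprSr; split => //.
have yz : z ^+ (2 ^ k) * z = 1 := hz; move: (z ^+ (2 ^ k)) yz => y yz.
have -> : z ^+ (2 ^ l) * z * (y ^+ (2 ^ l) + y + 1) =
   (y * z) ^+ (2 ^ l) * z + z ^+ (2 ^ l) * (y * z) + z ^+ (2 ^ l) * z.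
  by rewrite exprMn; ring.
by rewrite yz expr1n !mulr1; ring.
Qed.

Definition hconcl (D : {poly F}) :=
  (forall z, mu z -> D.[z] != 0) /\
  (forall z1 z2, mu z1 -> mu z2 -> Dt D z1 * D.[z2] = Dt D z2 * D.[z1] -> z1 = z2).

Lemma caseAE (a : F) D : a ^+ 2 + a + 1 = 0 -> D = 'X^(2 ^ l + 1) + 'X + 1 ->
  ~~ odd l -> (0 < k)%N -> (0 < l)%N -> (logn 2 l <= logn 2 k)%N -> hconcl D.
Proof.
move=> ha hD hl k0 l0 hlk.
apply: (@h_inj a (a ^+ 2) (2 ^ l - 1) (fun z => D.[z]) (Dt D) ha (root_sq ha)).
  by move=> u hu hue; apply: (e_inj k0 l0 hu hue); left.
move=> z hz w hw hzw.
have hZ := prep hz hzw; rewrite (root_Q ha) (negbTE hl) in hZ.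
have [-> ->] := evalA hD hz.
set A := a * w + 1 in hzw *; set W := w ^+ (2 ^ l) in hZ *.
set A' := a * W + 1 in hZ *; set Z := z ^+ (2 ^ l) in hZ *.
have hW : W = w ^+ (2 ^ l - 1) * w by rewrite -exprSr subn1 prednK ?expn_gt0.
set v := w ^+ (2 ^ l - 1) in hW *.
exists w, (A * A'); split.
- exact: mu_neq0 hw.
- by rewrite mulf_neq0 // ?(root_mu ha hw) // (root_mu ha (muX _ hw)).
- have -> : (Z * z + z + 1) * (A * A') = (Z * A') * (z * A) + (z * A) * A' + A * A' by ring.
  rewrite hZ hzw /A' /A hW.
  apply: (modeq h2 ha (c1 := 1 + w ^+ 2 * v) (c2 := a * w + a * w * v)); ring.
- have -> : (Z * z + Z + 1) * (A * A') = (Z * A') * (z * A) + (Z * A') * A + A * A' by ring.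
  rewrite hZ hzw /A' /A hW.
  apply: (modeq h2 ha (c1 := 1 + w ^+ 2 * v) (c2 := a * w + a * w * v)); ring.
Qed.

Lemma root_neq0 (a : F) : a ^+ 2 + a + 1 = 0 -> a != 0.
Proof.
move=> ha; apply/eqP => a0; move: ha; rewrite a0 expr0n /= !add0r => /eqP.
by rewrite oner_eq0.
Qed.

Lemma lognk : (0 < k)%N -> (0 < logn 2 k)%N.
Proof. by move=> k0; rewrite logn_gt0 mem_primes /= k0 dvdn2 keven. Qed.

Lemma lognl : odd l -> logn 2 l = 0%N.
Proof. by move=> hl; apply: logn_coprime; rewrite coprime2n. Qed.

Lemma caseAO (a : F) D : a ^+ 2 + a + 1 = 0 -> D = 'X^(2 ^ l + 1) + 'X + 1 ->
  odd l -> (0 < k)%N -> (0 < l)%N -> hconcl D.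
Proof.
move=> ha hD hl k0 l0.
apply: (@h_inj a a (2 ^ l + 1) (fun z => D.[z]) (Dt D) ha ha).
  move=> u hu hue; apply: (e_inj k0 l0 hu hue); right; split => //.
  by rewrite lognl // eq_sym -lt0n lognk.
move=> z hz w hw hzw.
have hZ := prep hz hzw; rewrite (root_Q ha) hl in hZ.
have [-> ->] := evalA hD hz.
set A := a * w + 1 in hzw *; set W := w ^+ (2 ^ l) in hZ *.
set A' := a ^+ 2 * W + 1 in hZ *; set Z := z ^+ (2 ^ l) in hZ *.
have hv : w ^+ (2 ^ l + 1) = W * w by rewrite addn1 exprSr.
rewrite hv.
exists a, (A * A'); split.
- exact: root_neq0 ha.
- by rewrite mulf_neq0 // ?(root_mu ha hw) // (root_mu (root_sq ha) (muX _ hw)).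
- have -> : (Z * z + z + 1) * (A * A') = (Z * A') * (z * A) + (z * A) * A' + A * A' by ring.
  rewrite hZ hzw /A' /A.
  apply: (modeq h2 ha (c1 := -1 + w - w * W + a + a * W + a * w * W) (c2 := 1 + w * W)); ring.
- have -> : (Z * z + Z + 1) * (A * A') = (Z * A') * (z * A) + (Z * A') * A + A * A' by ring.
  rewrite hZ hzw /A' /A.
  apply: (modeq h2 ha (c1 := -1 + W - w * W + a + a * w + a * w * W) (c2 := 1 + w * W)); ring.
Qed.

Lemma caseBE (a : F) D : a ^+ 2 + a + 1 = 0 -> D = 'X^(2 ^ l) + 'X + 1 ->
  ~~ odd l -> (0 < k)%N -> (0 < l)%N -> logn 2 l != logn 2 k -> hconcl D.
Proof.
move=> ha hD hl k0 l0 hlk.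
apply: (@h_inj a (a ^+ 2) (2 ^ l + 1) (fun z => D.[z]) (Dt D) ha (root_sq ha)).
  by move=> u hu hue; apply: (e_inj k0 l0 hu hue); right.
move=> z hz w hw hzw.
have hZ := prep hz hzw; rewrite (root_Q ha) (negbTE hl) in hZ.
have [-> ->] := evalB hD hz.
set A := a * w + 1 in hzw *; set W := w ^+ (2 ^ l) in hZ *.
set A' := a * W + 1 in hZ *; set Z := z ^+ (2 ^ l) in hZ *.
have hv : w ^+ (2 ^ l + 1) = W * w by rewrite addn1 exprSr.
rewrite hv.
exists 1, (A * A'); split.
- exact: oner_neq0.
- by rewrite mulf_neq0 // ?(root_mu ha hw) // (root_mu ha (muX _ hw)).
- have -> : (Z + z + 1) * (A * A') = (Z * A') * A + (z * A) * A' + A * A' by ring.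
  rewrite hZ hzw /A' /A.
  apply: (modeq h2 ha (c1 := W + w) (c2 := a + a * w * W)); ring.
- have -> : (z + Z + Z * z) * (A * A') = (z * A) * A' + (Z * A') * A + (Z * A') * (z * A) by ring.
  rewrite hZ hzw /A' /A.
  apply: (modeq h2 ha (c1 := W + w) (c2 := a + a * w * W)); ring.
Qed.

Lemma caseBO (a : F) D : a ^+ 2 + a + 1 = 0 -> D = 'X^(2 ^ l) + 'X + 1 ->
  odd l -> (0 < k)%N -> (0 < l)%N -> hconcl D.
Proof.
move=> ha hD hl k0 l0.
apply: (@h_inj a a (2 ^ l - 1) (fun z => D.[z]) (Dt D) ha ha).
  by move=> u hu hue; apply: (e_inj k0 l0 hu hue); left; rewrite lognl.
move=> z hz w hw hzw.
have hZ := prep hz hzw; rewrite (root_Q ha) hl in hZ.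
have [-> ->] := evalB hD hz.
set A := a * w + 1 in hzw *; set W := w ^+ (2 ^ l) in hZ *.
set A' := a ^+ 2 * W + 1 in hZ *; set Z := z ^+ (2 ^ l) in hZ *.
have hW : W = w ^+ (2 ^ l - 1) * w by rewrite -exprSr subn1 prednK ?expn_gt0.
set v := w ^+ (2 ^ l - 1) in hW *.
exists (a * w), (A * A'); split.
- by rewrite mulf_neq0 ?(root_neq0 ha) ?(mu_neq0 hw).
- by rewrite mulf_neq0 // ?(root_mu ha hw) // (root_mu (root_sq ha) (muX _ hw)).
- have -> : (Z + z + 1) * (A * A') = (Z * A') * A + (z * A) * A' + A * A' by ring.
  rewrite hZ hzw /A' /A hW.
  apply: (modeq h2 ha (c1 := 1 - w - w * v + a * w + a * w * v + a * w ^+ 2 * v) (c2 := w + w * v)); ring.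
- have -> : (z + Z + Z * z) * (A * A') = (z * A) * A' + (Z * A') * A + (Z * A') * (z * A) by ring.
  rewrite hZ hzw /A' /A hW.
  apply: (modeq h2 ha (c1 := - w - w * v + w ^+ 2 * v + a + a * w + a * w * v) (c2 := w + w * v)); ring.
Qed.

Lemma perm_generic r (B : {poly F}) (Dv Dtv : F -> F) : (0 < k)%N ->
  #|F| = (2 ^ k * 2 ^ k)%N -> (0 < r)%N -> coprime r (2 ^ k - 1) ->
  (forall z, mu z -> B.[z] != 0) ->
  (forall z, mu z -> Dv z != 0) ->
  (forall z, mu z -> z ^+ r * B.[z] ^+ (2 ^ k) * Dv z = Dtv z * B.[z]) ->
  (forall z1 z2, mu z1 -> mu z2 -> Dtv z1 * Dv z2 = Dtv z2 * Dv z1 -> z1 = z2) ->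
  permutes (xrB r (2 ^ k) B).
Proof.
move=> k0 hcard r0 hcop hB hD hK hinj.
have fE x : (xrB r (2 ^ k) B).[x] = x ^+ r * B.[x ^+ (2 ^ k - 1)].
  by rewrite /xrB hornerM hornerXn horner_comp hornerXn.
have q1 : (1 <= 2 ^ k)%N by rewrite expn_gt0.
have muq x : x != 0 -> mu (x ^+ (2 ^ k - 1)).
  move=> x0; rewrite /mu -exprM -exprD.
  have -> : ((2 ^ k - 1) * 2 ^ k + (2 ^ k - 1) = 2 ^ k * 2 ^ k - 1)%N.
    move: q1; move: (2 ^ k)%N => q q1; nia.
  apply: (mulIf x0); rewrite mul1r -exprSr subn1 prednK ?muln_gt0 ?q1 //.
  by rewrite -hcard expf_card.
have fx x : x != 0 ->
   (x ^+ r * B.[x ^+ (2 ^ k - 1)]) ^+ (2 ^ k) * Dv (x ^+ (2 ^ k - 1)) =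
   Dtv (x ^+ (2 ^ k - 1)) * (x ^+ r * B.[x ^+ (2 ^ k - 1)]).
  move=> x0; have := hK _ (muq x x0) => hk.
  rewrite exprMn -exprM.
  have -> : (r * 2 ^ k = r + (2 ^ k - 1) * r)%N.
    move: q1; move: (2 ^ k)%N => q q1; nia.
  rewrite exprD exprM.
  transitivity (x ^+ r * ((x ^+ (2 ^ k - 1)) ^+ r * B.[x ^+ (2 ^ k - 1)] ^+ (2 ^ k) *
     Dv (x ^+ (2 ^ k - 1)))); first by ring.
  rewrite hk; ring.
rewrite /permutes; apply: injF_bij => x y /=; rewrite !fE.
have fnz u : u != 0 -> u ^+ r * B.[u ^+ (2 ^ k - 1)] != 0.
  by move=> u0; rewrite mulf_neq0 ?expf_neq0 //; apply: hB; apply: muq.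
have f0 : (0 : F) ^+ r * B.[0 ^+ (2 ^ k - 1)] = 0 by rewrite -(prednK r0) exprS !mul0r.
case: (eqVneq x 0) => [->|x0]; case: (eqVneq y 0) => [->|y0] //.
- by rewrite f0 => /esym/eqP; rewrite (negbTE (fnz _ y0)).
- by rewrite f0 => /eqP; rewrite (negbTE (fnz _ x0)).
move=> hxy.
have hx := fx x x0; have hy := fx y y0.
rewrite -hxy in hy.
set c := x ^+ r * B.[x ^+ (2 ^ k - 1)] in hxy hx hy.
have c0 : c != 0 := fnz x x0.
have ezz : x ^+ (2 ^ k - 1) = y ^+ (2 ^ k - 1).
  apply: hinj; try by apply: muq.
  apply: (mulIf c0).
  have -> : Dtv (x ^+ (2 ^ k - 1)) * Dv (y ^+ (2 ^ k - 1)) * c =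
     (Dtv (x ^+ (2 ^ k - 1)) * c) * Dv (y ^+ (2 ^ k - 1)) by ring.
  have -> : Dtv (y ^+ (2 ^ k - 1)) * Dv (x ^+ (2 ^ k - 1)) * c =
     (Dtv (y ^+ (2 ^ k - 1)) * c) * Dv (x ^+ (2 ^ k - 1)) by ring.
  rewrite -hx -hy; ring.
rewrite /c ezz in hxy.
have xy : x ^+ r = y ^+ r by apply: (mulIf (hB _ (muq y y0))).
case: (egcdnP (2 ^ k - 1) r0) => km kn hkm _.
rewrite (eqP hcop) in hkm.
have := congr1 (fun u => u ^+ km) xy; rewrite /= -!exprM mulnC hkm.
rewrite addn1 !exprSr mulnC !exprM ezz.
by apply: mulfI; rewrite expf_neq0 // mu_neq0 //; apply: muq.
Qed.

Lemma frob_D n z : ('X^n + 'X + 1 : {poly F}).[z] ^+ (2 ^ k) =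
  ('X^n + 'X + 1 : {poly F}).[z ^+ (2 ^ k)].
Proof. by rewrite !hornerE !frobn // expr1n exprAC. Qed.

Lemma T_frob t z : ('X^(2 * t) + 'X^t + 1 : {poly F}).[z] ^+ (2 ^ k) =
  ('X^(2 * t) + 'X^t + 1 : {poly F}).[z ^+ (2 ^ k)].
Proof. by rewrite !hornerE !frobn // expr1n !(exprAC _ (2 ^ k)). Qed.

Lemma T_eval t z : mu z -> z ^+ (2 * t) * ('X^(2 * t) + 'X^t + 1 : {poly F}).[z ^+ (2 ^ k)] =
  ('X^(2 * t) + 'X^t + 1 : {poly F}).[z].
Proof.
move=> hz; rewrite !hornerE.
have yz : z ^+ (2 ^ k) * z = 1 := hz; move: (z ^+ (2 ^ k)) yz => y yz.
have -> : z ^+ (2 * t) * (y ^+ (2 * t) + y ^+ t + 1) =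
  (y * z) ^+ (2 * t) + (y * z) ^+ t * z ^+ t + z ^+ (2 * t).
  rewrite !exprMn mulnC !exprM; ring.
by rewrite yz !expr1n mul1r; ring.
Qed.

Lemma T_nz t z : mu z -> ('X^(2 * t) + 'X^t + 1 : {poly F}).[z] != 0.
Proof.
move=> hz; rewrite !hornerE mulnC exprM.
exact: mu_noroot (muX t hz).
Qed.

Lemma P_eval z : ('X^2 + 'X + 1 : {poly F}).[z] = z ^+ 2 + z + 1.
Proof. by rewrite !hornerE. Qed.

Lemma P_q z : mu z -> (z ^+ 2 + z + 1) ^+ (2 ^ k) * z ^+ 2 = z ^+ 2 + z + 1.
Proof.
move=> hz; rewrite !frobn // expr1n exprAC.
have yz : z ^+ (2 ^ k) * z = 1 := hz; move: (z ^+ (2 ^ k)) yz => y yz.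
have -> : (y ^+ 2 + y + 1) * z ^+ 2 = (y * z) ^+ 2 + (y * z) * z + z ^+ 2 by ring.
by rewrite yz expr1n mul1r; ring.
Qed.

Lemma part1 (D : {poly F}) t r : (0 < k)%N -> #|F| = (2 ^ k * 2 ^ k)%N -> hconcl D ->
  (D = 'X^(2 ^ l + 1) + 'X + 1 \/ D = 'X^(2 ^ l) + 'X + 1) -> (0 < r)%N ->
  coprime r (2 ^ k - 1) -> r = (2 ^ l + 1 + 2 * t)%N %[mod 2 ^ k + 1] ->
  permutes (xrB r (2 ^ k) (D * ('X^(2 * t) + 'X^t + 1))).
Proof.
move=> k0 hcard [hDnz hDinj] hD r0 hcop hr.
have frD z : D.[z] ^+ (2 ^ k) = D.[z ^+ (2 ^ k)] by case: hD => ->; apply: frob_D.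
apply: (@perm_generic r _ (fun z => D.[z]) (Dt D)) => //.
- by move=> z hz; rewrite hornerM mulf_neq0 ?hDnz ?T_nz.
- move=> z hz.
  have zr : z ^+ r = z ^+ (2 ^ l + 1 + 2 * t).
    have zq : z ^+ (2 ^ k + 1) = 1 by rewrite addn1 exprSr.
    by rewrite -(expr_mod r zq) hr (expr_mod _ zq).
  rewrite zr hornerM exprMn frD T_frob /Dt exprD -(T_eval t hz); ring.
Qed.

Lemma part2 (D B : {poly F}) r : (0 < k)%N -> (0 < l)%N -> #|F| = (2 ^ k * 2 ^ k)%N -> hconcl D ->
  (D = 'X^(2 ^ l + 1) + 'X + 1 \/ D = 'X^(2 ^ l) + 'X + 1) ->
  B * ('X^2 + 'X + 1) = D -> (0 < r)%N ->
  coprime r (2 ^ k - 1) -> r = (2 ^ l - 1)%N %[mod 2 ^ k + 1] ->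
  permutes (xrB r (2 ^ k) B).
Proof.
move=> k0 l0 hcard [hDnz hDinj] hD hBP r0 hcop hr.
have frD z : D.[z] ^+ (2 ^ k) = D.[z ^+ (2 ^ k)] by case: hD => ->; apply: frob_D.
have hBPz z : B.[z] * (z ^+ 2 + z + 1) = D.[z] by rewrite -hBP hornerM P_eval.
apply: (@perm_generic r _ (fun z => D.[z]) (Dt D)) => //.
- move=> z hz; apply/eqP => b0; move: (hDnz z hz); by rewrite -hBPz b0 mul0r eqxx.
- move=> z hz.
  have zr : z ^+ r = z ^+ (2 ^ l - 1).
    have zq : z ^+ (2 ^ k + 1) = 1 by rewrite addn1 exprSr.
    by rewrite -(expr_mod r zq) hr (expr_mod _ zq).
  have pz := mu_noroot hz.
  apply: (mulIf (_ : (z ^+ 2 + z + 1) ^+ (2 ^ k) * z ^+ 2 != 0)).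
    by rewrite mulf_neq0 ?expf_neq0 // mu_neq0.
  rewrite zr.
  transitivity ((z ^+ (2 ^ l - 1) * z ^+ 2) * (B.[z] * (z ^+ 2 + z + 1)) ^+ (2 ^ k) * D.[z]).
    rewrite exprMn; ring.
  rewrite -exprD hBPz frD /Dt.
  have -> : (2 ^ l - 1 + 2 = 2 ^ l + 1)%N.
    have := expn_gt0 2 l; move: (2 ^ l)%N => Q Q1; lia.
  by rewrite P_q // -(hBPz z) /Dt; ring.
Qed.

Lemma P_dvd (a : F) (D : {poly F}) : a ^+ 2 + a + 1 = 0 ->
  (D = 'X^(2 ^ l + 1) + 'X + 1 /\ ~~ odd l) \/ (D = 'X^(2 ^ l) + 'X + 1 /\ odd l) ->
  ('X^2 + 'X + 1) %| D.
Proof.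
move=> ha hD.
have Dr c : c ^+ 2 + c + 1 = 0 -> D.[c] = 0.
  move=> hc; case: hD => [[-> hl]|[-> hl]]; rewrite !hornerE ?addn1 ?exprSr (root_Q hc).
    by rewrite (negbTE hl) -expr2.
  by rewrite hl.
have [q0 hq0] : exists q0, D = q0 * \prod_(z <- [:: a; a ^+ 2]) ('X - z%:P).
  apply: uniq_roots_prod_XsubC.
    by rewrite /= /root !Dr ?eqxx // root_sq.
  rewrite uniq_rootsE /= andbT inE.
  apply/eqP => e.
  have : a ^+ 2 + a + 1 = 1 by rewrite -e addxx // add0r.
  by rewrite ha => /eqP; rewrite eq_sym oner_eq0.
rewrite hq0 big_cons big_cons big_nil mulr1.
have -> : ('X - a%:P) * ('X - (a ^+ 2)%:P) =
   'X^2 - (a%:P + (a ^+ 2)%:P) * 'X + a%:P * (a ^+ 2)%:P by ring.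
rewrite -rmorphD -rmorphM.
have -> : a + a ^+ 2 = -1.
  by apply/eqP; rewrite -subr_eq0 opprK -ha; apply/eqP; ring.
have -> : a * a ^+ 2 = 1 by rewrite -exprS (root3 ha).
rewrite rmorphN rmorph1 mulN1r opprK.
exact: dvdp_mull (dvdpp _).
Qed.

End Fin.


Lemma char2_of (F : finFieldType) k : (0 < k)%N -> #|F| = (2 ^ k * 2 ^ k)%N -> (1 + 1 : F) = 0.
Proof.
move=> k0 hc.
have e : (-1 : F) = 1.
  rewrite -{1}(expf_card (-1 : F)) -signr_odd hc oddM oddX /=.
  by rewrite -(prednK k0).
by rewrite -{1}e addNr.
Qed.

Lemma root_exists (F : finFieldType) k : #|F| = (2 ^ k * 2 ^ k)%N ->
  exists a : F, a ^+ 2 + a + 1 = 0.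
Proof.
move=> hc.
have hdiv : (3 %| #|[set: {unit F}]|)%N.
  rewrite card_finField_unit hc -expnMn /=.
  have hm : (4 ^ k %% 3 = 1)%N by rewrite -modnXm /= exp1n.
  set n := (4 ^ k)%N in hm *.
  have n1 : n = (n %/ 3 * 3 + 1)%N by rewrite {1}(divn_eq n 3) hm.
  by rewrite n1 addn1 /= dvdn_mull.
have [x _ hx] := @Cauchy _ 3 [set: {unit F}]%G isT hdiv.
exists (val x).
have x3 : val x ^+ 3 = 1.
  by rewrite -FinRing.val_unitX -hx expg_order.
have x1 : val x != 1.
  apply/eqP => e.
  have e' : x = 1%g by apply: val_inj; rewrite e.
  have h := order_gt1 x.
  by rewrite hx e' eqxx in h.
have : (val x - 1) * (val x ^+ 2 + val x + 1) = 0.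
  have -> : (val x - 1) * (val x ^+ 2 + val x + 1) = val x ^+ 3 - 1 by ring.
  by rewrite x3 subrr.
by move/eqP; rewrite mulf_eq0 subr_eq0 (negbTE x1) /= => /eqP.
Qed.

Unset Implicit Arguments.

Theorem corollary5 (k l t : nat) (F : finFieldType) (D : {poly F}) :
  (0 < k)%N -> (0 < l)%N -> (0 < t)%N -> ~~ odd k ->
  #|F| = (2 ^ k * 2 ^ k)%N ->
  let q := (2 ^ k)%N in
  let Q := (2 ^ l)%N in
  let cond_a := (ord2 l <= ord2 k)%N /\ D = 'X^(Q + 1) + 'X + 1 in
  let cond_b := ord2 l <> ord2 k /\ D = 'X^Q + 'X + 1 in
  cond_a \/ cond_b ->
  (forall r : nat, (0 < r)%N -> coprime r (q - 1) ->
     r = (Q + 1 + 2 * t)%N %[mod q + 1] ->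
     permutes (xrB r q (D * ('X^(2 * t) + 'X^t + 1)))) /\
  ((~~ odd l /\ cond_a) \/ (odd l /\ cond_b) ->
     ('X^2 + 'X + 1) %| D /\
     (forall r : nat, (0 < r)%N -> coprime r (q - 1) ->
        r = (Q - 1)%N %[mod q + 1] ->
        permutes (xrB r q (D %/ ('X^2 + 'X + 1))))).
Proof.
move=> k0 l0 t0 keven hcard q Q cond_a cond_b hcase.
have h2 := char2_of k0 hcard.
have [a ha] := root_exists hcard.
rewrite /cond_a /cond_b /ord2 /Q /q in hcase *.
have hc : hconcl k l D.
  case: hcase => [[hlk hD]|[hlk hD]]; case hl: (odd l).
  - exact: (caseAO h2 keven ha hD hl k0 l0).
  - exact: (caseAE h2 keven ha hD (negbT hl) k0 l0 hlk).
  - exact: (caseBO h2 keven ha hD hl k0 l0).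
  - by apply: (caseBE h2 keven ha hD (negbT hl) k0 l0); apply/eqP.
have hshape : D = 'X^(2 ^ l + 1) + 'X + 1 \/ D = 'X^(2 ^ l) + 'X + 1.
  by case: hcase => [[_ ->]|[_ ->]]; [left|right].
split.
  move=> r r0 hcop hr.
  exact: (part1 h2 keven k0 hcard hc hshape r0 hcop hr).
move=> hpar.
have hdvd : ('X^2 + 'X + 1) %| D.
  apply: (P_dvd h2 ha).
  by case: hpar => [[hl [_ ->]]|[hl [_ ->]]]; [left|right].
split => // r r0 hcop hr.
apply: (part2 h2 keven k0 l0 hcard hc hshape (divpK hdvd) r0 hcop hr).
Qed.
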